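(* Let $T$ be the regular rooted tree of valence $p\geq 2$ with the embedded wire diffeology $\mathcal{D}_T$. Then the functional diffeology on $\operatorname{Aut}T$ is the discrete diffeology; that is, every plot $P:U\to\operatorname{Aut}T$ (with $U$ an open subset of some $\mathbb{R}^k$) of the functional diffeology is locally constant.
   Context: Fix a finite alphabet $A$ with $|A|=p\geq 2$. The vertices of $T$ are the finite words over $A$ (the root is the empty word); two vertices are joined by an edge iff they have the form $a_1\dots a_n$ and $a_1\dots a_na_{n+1}$. As a topological space, $T$ is the 1-dimensional CW complex obtained by realizing each edge as a copy of $[0,1]$, with its usual topology. $\operatorname{Aut}T$ is the group of bijections of the vertex set fixing the root and preserving adjacency; each is regarded as a homeomorphism of the geometric realization mapping each edge affinely onto its image edge. A diffeology on a set $X$ is a collection of maps $U\to X$ (''plots''), $U$ ranging over open subsets of all $\mathbb{R}^n$, containing all constant maps, closed under precomposition with smooth maps, and satisfying the sheaf condition. The discrete diffeology on $X$ consists of all locally constant maps $U\to X$. The embedded wire diffeology $\mathcal{D}_T$ is the diffeology on $T$ generated by (i.e. the smallest diffeology containing) all maps $\gamma:\mathbb{R}\to T$ that are injective, continuous, and homeomorphisms onto their images. A map between diffeological spaces is smooth if it sends plots to plots. The functional diffeology on $C^\infty(T,T)$ is the coarsest diffeology such that the evaluation map $C^\infty(T,T)\times T\to T$ is smooth (with the product diffeology, the coarsest making projections smooth); $\operatorname{Aut}T\subseteq C^\infty(T,T)$ carries the subset diffeology. Equivalently, $P:U\to\operatorname{Aut}T$ is a plot iff $(u,x)\mapsto P(u)(x)$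 is smooth $U\times T\to T$. *)

(* Defs.v *)
From HB Require Import structures.
From mathcomp Require Import all_boot all_order all_algebra.
From mathcomp Require Import all_classical all_reals all_analysis.

Set Implicit Arguments.
Unset Strict Implicit.
Unset Printing Implicit Defensive.

Import Order.TTheory GRing.Theory Num.Theory.
Import numFieldNormedType.Exports.
Local Open Scope classical_set_scope.
Local Open Scope ring_scope.

Section RegularTree.
Variable R : realType.
Variable A : finType.   (* the alphabet, |A| = p *)

(* The tree T: vertices are words (seq A), root = [::];               *)
Definition tadj (u w : seq A) : Prop :=
  (exists a, w = rcons u a) \/ (exists a, u = rcons w a).

Definition is_aut (g : seq A -> seq A) : Prop :=
  bijective g /\ g [::] = [::] /\ forall u w, tadj u w <-> tadj (g u) (g w).

(* Geometric realization.  The edge between u and u a is coded by the *)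
(* pair (u, a); its interior points are Ed u a t, 0 < t < 1, where t  *)
(* is the affine coordinate (t = 0 at u, t = 1 at u a).               *)
Definition open_unit := {t : R | 0 < t < 1}.

Inductive tpoint :=
| Vx of seq A
| Ed of seq A & A & open_unit.

Definition chi (u : seq A) (a : A) (t : R) : tpoint :=
  match @insub R (fun t => 0 < t < 1) open_unit t with
  | Some s => Ed u a s
  | None => if t <= 0 then Vx u else Vx (rcons u a)
  end.

(* CW (weak) topology: O is open iff its preimage under every
   characteristic map is open in [0,1]. *)
Definition topen (O : set tpoint) : Prop :=
  forall u a, exists V : set R, open V /\
    forall t : R, 0 <= t <= 1 -> (V t <-> O (chi u a t)).

Definition tcontinuous (g : R -> tpoint) : Prop :=
  forall O, topen O -> open (g @^-1` O).

Definition homeo_onto_image (g : R -> tpoint) : Prop :=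
  tcontinuous g /\
  forall V : set R, open V -> exists O, topen O /\ g @` V = range g `&` O.

Definition wire (g : R -> tpoint) : Prop :=
  injective g /\ homeo_onto_image g.

(* action of a vertex map on the realization: vertices go to vertices,
   each edge is mapped affinely onto the image edge. *)
Definition split_last (s : seq A) : option (seq A * A) :=
  match rev s with
  | [::] => None
  | a :: r => Some (rev r, a)
  end.

Definition realize (g : seq A -> seq A) (x : tpoint) : tpoint :=
  match x with
  | Vx v => Vx (g v)
  | Ed u a t =>
    let gu := g u in let gw := g (rcons u a) in
    match split_last gw with
    | Some (u', b) =>
        if u' == gu then Ed u' b t else
        match split_last gu with
        | Some (w', c) =>
            if w' == gw then chi w' c (1 - val t) else Vx gu
        | None => Vx gu
        end
    | None =>
        match split_last gu with
        | Some (w', c) =>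
            if w' == gw then chi w' c (1 - val t) else Vx gu
        | None => Vx gu
        end
    end
  end.

Fixpoint Ck (k : nat) (m n : nat) (V : set 'rV[R]_m) (f : 'rV[R]_m -> 'rV[R]_n)
  {struct k} : Prop :=
  match k with
  | 0 => forall x, V x -> {for x, continuous f}
  | k'.+1 => (forall x, V x -> differentiable f x) /\
             forall i : 'I_m, Ck k' V (fun x => 'D_(delta_mx 0 i) f x)
  end.

Definition smooth_on (m n : nat) (V : set 'rV[R]_m) (f : 'rV[R]_m -> 'rV[R]_n) :=
  forall k, Ck k V f.

(* Diffeologies.  A parametrization of X is (n, U, P) with U an open   *)
(* subset of R^n and P : U -> X (represented as a total function whose *)
(* values outside U are irrelevant).                                   *)
Definition plots_of (X : Type) :=
  forall n : nat, set 'rV[R]_n -> ('rV[R]_n -> X) -> Prop.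

Definition is_diffeology (X : Type) (D : plots_of X) : Prop :=
  (forall n U P, D n U P -> open U) /\
  (* plots are maps on U: only their values on U matter *)
  (forall n U (P Q : 'rV[R]_n -> X), D n U P ->
      (forall u, U u -> P u = Q u) -> D n U Q) /\
  (forall n (U : set 'rV[R]_n) (x : X), open U -> D n U (fun _ => x)) /\
  (forall n m (U : set 'rV[R]_n) (V : set 'rV[R]_m) P f,
      D n U P -> open V -> smooth_on V f -> (forall v, V v -> U (f v)) ->
      D m V (P \o f)) /\
  (forall n (U : set 'rV[R]_n) P, open U ->
      (forall u, U u -> exists W, open W /\ W u /\ W `<=` U /\ D n W P) ->
      D n U P).

Definition generated (X : Type) (G : (R -> X) -> Prop) : plots_of X :=
  fun n U P => open U /\
    forall D : plots_of X, is_diffeology D ->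
      (forall g, G g -> D 1%N setT (fun v => g (v ord0 ord0))) -> D n U P.

Definition DT : plots_of tpoint := generated wire.

(* Plots of Aut T for the functional diffeology (subset diffeology of
   C^oo(T,T)): P : U -> Aut T is a plot iff (u,x) |-> P(u)(x) is smooth
   U x T -> T, U x T carrying the product diffeology, whose plots are
   pairs (f, Q) with f : W -> U smooth and Q a plot of D_T. *)
Definition aut_functional_plot (k : nat) (U : set 'rV[R]_k)
  (P : 'rV[R]_k -> (seq A -> seq A)) : Prop :=
  open U /\
  forall m (W : set 'rV[R]_m) (f : 'rV[R]_m -> 'rV[R]_k) (Q : 'rV[R]_m -> tpoint),
    open W -> smooth_on W f -> (forall w, W w -> U (f w)) -> DT W Q ->
    DT W (fun w => realize (P (f w)) (Q w)).

Definition discrete_plot (X : Type) (k : nat) (U : set 'rV[R]_k)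
  (P : 'rV[R]_k -> X) : Prop :=
  open U /\
  forall u, U u -> exists W, open W /\ W u /\ W `<=` U /\
    forall w, W w -> P w = P u.

End RegularTree.

(* Main.v *)
Require Import Defs.
From HB Require Import structures.
From mathcomp Require Import all_boot all_order all_algebra.
From mathcomp Require Import all_classical all_reals all_analysis.
Set Implicit Arguments.
Unset Strict Implicit.
Unset Printing Implicit Defensive.
Import Order.TTheory GRing.Theory Num.Theory.
Import numFieldNormedType.Exports.
Local Open Scope classical_set_scope.
Local Open Scope ring_scope.

Section S.
Variable R : realType.

Lemma generated_diffeo (X : Type) (G : (R -> X) -> Prop) :
  is_diffeology (generated G).
Proof.
split; first by move=> n U P [].
split.
  move=> n U P Q [oU HP] PQ; split=> // D HD HG.
  have [_ [Hl _]] := HD; exact: (Hl _ _ P) (HP D HD HG) PQ.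
split.
  move=> n U x oU; split=> // D HD HG.
  have [_ [_ [Hc _]]] := HD; exact: Hc.
split.
  move=> n m U V P f [oU HP] oV sf fV; split=> // D HD HG.
  have [_ [_ [_ [Hp _]]]] := HD; exact: (Hp _ _ U) (HP D HD HG) oV sf fV.
move=> n U P oU HW; split=> // D HD HG.
have [_ [_ [_ [_ Hs]]]] := HD; apply: (Hs _ U P) => // u Uu.
have [W [oW [Wu [WU [_ HP]]]]] := HW u Uu.
by exists W; split=> //; split=> //; split=> //; exact: HP.
Qed.

Lemma Ck_cst k m n (V : set 'rV[R]_m) (c : 'rV[R]_n) : Ck k V (fun _ => c).
Proof.
elim: k c => [|k IH] c /=.
  by move=> x _; exact: cst_continuous.
split; first by move=> x _; exact: differentiable_cst.
move=> i; have -> : (fun x => 'D_(delta_mx 0 i) (fun _ : 'rV[R]_m => c) x) = (fun _ => 0).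
  by apply/funext => x; rewrite derive_cst.
exact: IH.
Qed.

Lemma smooth_id m (V : set 'rV[R]_m) : smooth_on V id.
Proof.
case=> [|k] /=.
  by move=> x _; exact: cvg_id.
split; first by move=> x _; exact: ex_diff.
move=> i; have -> : (fun x => 'D_(delta_mx 0 i) (@id 'rV[R]_m) x) = (fun _ => delta_mx 0 i).
  by apply/funext => x; rewrite derive_id.
exact: Ck_cst.
Qed.

Lemma smooth_cont m n (V : set 'rV[R]_m) (f : 'rV[R]_m -> 'rV[R]_n) :
  smooth_on V f -> forall x, V x -> {for x, continuous f}.
Proof. by move=> /(_ 0%N). Qed.
End S.
Lemma open_loc (T : topologicalType) (S : set T) :
  (forall x, S x -> exists N, open N /\ N x /\ N `<=` S) -> open S.
Proof.
move=> H; rewrite openE => x Sx; have [N [oN [Nx NS]]] := H x Sx.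
apply: (filterS NS); exact: open_nbhs_nbhs.
Qed.

Lemma open_pre (T T' : topologicalType) (V : set T) (f : T -> T') (S : set T') :
  open V -> (forall x, V x -> {for x, continuous f}) -> open S ->
  open (V `&` f @^-1` S).
Proof.
move=> oV cf oS; rewrite openE => x [Vx Sfx]; apply: filterI.
  exact: open_nbhs_nbhs.
by apply: (cf x Vx); exact: open_nbhs_nbhs.
Qed.
Section S2.
Variable R : realType.
Variable A : finType.

Lemma split_last_rcons (s : seq A) a : split_last (rcons s a) = Some (s, a).
Proof. by rewrite /split_last rev_rcons revK. Qed.

Lemma aut_struct (g : seq A -> seq A) : is_aut g -> forall n u, size u = n ->
  size (g u) = n /\ forall a, exists b, g (rcons u a) = rcons (g u) b.
Proof.
move=> [[h gK hK] [g0 gadj]] n; elim: n => [|n IH] u su.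
- have -> : u = [::] by case: u su.
  rewrite g0; split=> // a.
  have /gadj [[b hb]|[b hb]] : tadj [::] (rcons [::] a) by left; exists a.
    by exists b; rewrite hb g0.
  by move: hb; rewrite g0; case: (g _).
- case/lastP: u su => [//|u' c]; rewrite size_rcons => -[su'].
  have [sg' Hg'] := IH u' su'.
  have [b' hb'] := Hg' c.
  have sgu : size (g (rcons u' c)) = n.+1 by rewrite hb' size_rcons sg'.
  split=> // a.
  have /gadj [[b hb]|[b hb]] : tadj (rcons u' c) (rcons (rcons u' c) a) by left; exists a.
    by exists b.
  exfalso; move: hb; rewrite hb' => /rcons_inj [] /(can_inj gK) E _.
  by move: (congr1 size E); rewrite !size_rcons => /eqP; rewrite ltn_eqF.
Qed.

Lemma aut_step (g : seq A -> seq A) : is_aut g -> forall u a,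
  exists b, g (rcons u a) = rcons (g u) b.
Proof. by move=> hg u a; have [_ H] := aut_struct hg (erefl (size u)); exact: H. Qed.

Lemma realize_Ed (g : seq A -> seq A) : is_aut g -> forall u a (t : open_unit R),
  exists b, g (rcons u a) = rcons (g u) b /\ realize g (Ed u a t) = Ed (g u) b t.
Proof.
move=> hg u a t; have [b hb] := aut_step hg u a.
by exists b; split=> //; rewrite /realize hb split_last_rcons eqxx.
Qed.

Lemma realize_Ed' (g : seq A -> seq A) u a b (t : open_unit R) :
  g (rcons u a) = rcons (g u) b -> realize g (Ed u a t) = Ed (g u) b t.
Proof. by move=> hb; rewrite /realize hb split_last_rcons eqxx. Qed.

Lemma realize_chi (g : seq A -> seq A) u a b (t : R) :
  g (rcons u a) = rcons (g u) b -> realize g (chi u a t) = chi (g u) b t.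
Proof.
move=> hb; rewrite /chi; case: insubP => [s _ _|_].
  exact: realize_Ed'.
by case: ifP => _ //=; rewrite hb.
Qed.

Lemma realize_topen (g : seq A -> seq A) : is_aut g -> forall O : set (tpoint R A),
  topen O -> topen (realize g @^-1` O).
Proof.
move=> hg O HO u a; have [b hb] := aut_step hg u a.
have [V [oV HV]] := HO (g u) b; exists V; split=> // t t01.
by rewrite /preimage /= (realize_chi t hb); exact: HV.
Qed.

Lemma aut_inv (g h : seq A -> seq A) : is_aut g -> cancel g h -> cancel h g ->
  is_aut h.
Proof.
move=> [_ [g0 gadj]] gK hK; split; first by exists g.
split; first by rewrite -{1}g0 gK.
by move=> u w; rewrite (gadj (h u)) !hK.
Qed.

Lemma realizeK (g h : seq A -> seq A) : is_aut g -> cancel g h -> cancel h g ->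
  cancel (@realize R A g) (realize h).
Proof.
move=> hg gK hK [v|u a t]; first by rewrite /= gK.
have [b hb] := aut_step hg u a.
rewrite (realize_Ed' t hb) (@realize_Ed' h (g u) b a) ?gK //.
by rewrite -hb !gK.
Qed.

Lemma wire_realize (g : seq A -> seq A) (gam : R -> tpoint R A) :
  is_aut g -> wire gam -> wire (realize g \o gam).
Proof.
move=> hg [gi [gc gh]].
have [h gK hK] := hg.1.
have hh := aut_inv hg gK hK.
have rgK := realizeK hg gK hK.
have rhK := realizeK hh hK gK.
split; first by move=> x y /= /(can_inj rgK) /gi.
split.
  move=> O oO; exact: (gc _ (realize_topen hg oO)).
move=> V oV; have [Oo [oOo E]] := gh V oV.
exists (realize h @^-1` Oo); split; first exact: realize_topen.
apply/seteqP; split=> x.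
  case=> v Vv <-; split; first by exists v.
  rewrite /preimage /= rgK.
  have : (gam @` V) (gam v) by exists v.
  by rewrite E => -[].
case=> -[s _ <-]; rewrite /preimage /= rgK => Oos.
have : (range gam `&` Oo) (gam s) by split=> //; exists s.
by rewrite -E => -[v Vv <-]; exists v.
Qed.

Lemma DT_props : is_diffeology (@DT R A).
Proof. exact: generated_diffeo. Qed.

Lemma DT_realize (g : seq A -> seq A) : is_aut g -> forall n (U : set 'rV[R]_n) Q,
  DT U Q -> DT U (realize g \o Q).
Proof.
move=> hg n U Q [oU HQ].
have [Do [Dl [Dc [Dp Ds]]]] := DT_props.
apply: (HQ (fun n U Q => DT U (realize g \o Q))).
  split; first by move=> ? ? ? /Do.
  split.
    move=> n' U' P' Q' HP PQ; apply: (Dl _ _ _ _ HP) => u Uu /=; by rewrite PQ.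
  split; first by move=> n' U' x oU'; exact: Dc.
  split; first by move=> n' m U' V P' f HP oV sf fV; exact: (Dp _ _ U' V _ f HP).
  by move=> n' U' P' oU' H; apply: Ds.
move=> gam wg; split; first exact: openT.
move=> D HD HG; exact: (HG _ (wire_realize hg wg)).
Qed.



Definition tcont : plots_of R (tpoint R A) := fun n U Q =>
  open U /\ forall O, topen O -> open (U `&` Q @^-1` O).

Lemma tcont_diffeo : is_diffeology tcont.
Proof.
split; first by move=> n U P [].
split.
  move=> n U P Q [oU HP] PQ; split=> // O oO.
  have -> : U `&` Q @^-1` O = U `&` P @^-1` O.
    by apply/seteqP; split=> x [Ux Ox]; split=> //; rewrite /preimage /= ?PQ // -?PQ.
  exact: HP.
split.
  move=> n U x oU; split=> // O oO; case: (pselect (O x)) => Ox.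
    have -> : U `&` (fun=> x) @^-1` O = U by apply/seteqP; split=> [y []//|y Uy]; split.
    done.
  have -> : U `&` (fun=> x) @^-1` O = set0 by apply/seteqP; split=> [y [] //|y []].
  exact: open0.
split.
  move=> n m U V P f [oU HP] oV sf fV; split=> // O oO.
  have -> : V `&` (P \o f) @^-1` O = V `&` f @^-1` (U `&` P @^-1` O).
    apply/seteqP; split=> x [Vx Ox]; split=> //; last by case: Ox.
    by split=> //; exact: fV.
  exact: (open_pre oV (smooth_cont sf) (HP O oO)).
move=> n U P oU H; split=> // O oO; apply: open_loc => x [Ux Ox].
have [W [oW [Wx [WU [_ HW]]]]] := H x Ux.
exists (W `&` P @^-1` O); split; first exact: HW.
split; first by split.
by move=> y [Wy Oy]; split=> //; exact: WU.
Qed.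

Lemma DT_tcont n (U : set 'rV[R]_n) Q : DT U Q -> tcont U Q.
Proof.
move=> [oU HQ]; apply: (HQ _ tcont_diffeo).
move=> gam [_ [gc _]]; split; first exact: openT.
move=> O oO; rewrite setTI.
apply: (@open_comp _ _ (fun v : 'rV[R]_1 => v ord0 ord0) (gam @^-1` O)); last exact: gc.
move=> v _; apply: differentiable_continuous; exact: differentiable_coord.
Qed.

Definition star (v : seq A) : set (tpoint R A) :=
  fun x => x = Vx R v \/ exists u a t, x = Ed u a t.

Lemma open_or (P : Prop) (S : set R) : open S -> open [set t | P \/ S t].
Proof.
move=> oS; case: (pselect P) => H.
  have -> : [set t | P \/ S t] = setT by apply/seteqP; split=> // t _; left.
  exact: openT.
have -> : [set t | P \/ S t] = S by apply/seteqP; split=> t /=; [case | right].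
done.
Qed.

Lemma star_open v : topen (star v).
Proof.
move=> u a.
exists ([set t | u = v \/ 0 < t] `&` [set t | rcons u a = v \/ t < 1]); split.
  by apply: openI; apply: open_or; [exact: open_gt | exact: open_lt].
move=> t /andP [t0 t1]; rewrite /chi; case: insubP => [s /andP[st0 st1] _ | nst].
  split=> _; first by right; do 3 eexists.
  by split; right.
case: ifP => [tle0 | tgt0].
  have -> : t = 0 by apply/eqP; rewrite eq_le tle0 t0.
  split.
    by case=> -[->|]; [left | rewrite ltxx].
  case=> [[->]|[? [? [? //]]]]; split; [by left|by right].
have tp : 0 < t by rewrite ltNge tgt0.
have -> : t = 1.
  by move: nst; rewrite tp /= -leNgt => t1'; apply/eqP; rewrite eq_le t1 t1'.
split.
  by case=> _ [->|]; [left | rewrite ltxx].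
case=> [[->]|[? [? [? //]]]]; split; [by right|by left].
Qed.

End S2.

Lemma seg_const (R : realType) k (U : set 'rV[R]_k) (X : Type) (phi : 'rV[R]_k -> X)
  (loc : forall w, U w -> exists W, open W /\ W w /\ W `<=` U /\
     forall w', W w' -> phi w' = phi w)
  u0 w (seg : forall t : R, 0 <= t <= 1 -> U (u0 + t *: (w - u0))) :
  phi w = phi u0.
Proof.
pose gam := fun t : R => u0 + t *: (w - u0).
have cg : continuous gam.
  move=> t; apply: cvgD; first exact: cvg_cst.
  exact: scalel_continuous.
pose G := [set t | U (gam t) /\ phi (gam t) = phi u0].
pose B := [set t | U (gam t) /\ phi (gam t) <> phi u0].
have oG : open G.
  apply: open_loc => t [Ut Et]; have [W [oW [Wg [WU HW]]]] := loc _ Ut.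
  exists (setT `&` gam @^-1` W); split.
    exact: (open_pre openT (fun x _ => cg x) oW).
  split; first by split.
  by move=> s [_ Ws]; split; [exact: WU | rewrite HW].
have oB : open B.
  apply: open_loc => t [Ut Et]; have [W [oW [Wg [WU HW]]]] := loc _ Ut.
  exists (setT `&` gam @^-1` W); split.
    exact: (open_pre openT (fun x _ => cg x) oW).
  split; first by split.
  by move=> s [_ Ws]; split; [exact: WU | rewrite HW].
have g0 : gam 0 = u0 by rewrite /gam scale0r addr0.
have g1 : gam 1 = w by rewrite /gam scale1r addrC subrK.
have E : `[0, 1] `&` G = `[0, 1] `&` ~` B.
  apply/seteqP; split=> t [t01 Ht]; split=> //.
    by case: Ht => _ Ht [_].
  have Ut : U (gam t) by apply: seg; move: t01; rewrite /= in_itv.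
  by split=> //; case: (pselect (phi (gam t) = phi u0)) => // /(conj Ut).
have H := @segment_connected R 0 1 (`[0, 1] `&` G).
have H1 : `[0, 1] `&` G !=set0.
  exists 0; split; first by rewrite /= in_itv /= lexx ler01.
  by rewrite /G /= g0; split=> //; rewrite -g0; apply: seg; rewrite lexx ler01.
have H2 : exists2 C : set R, open C & `[0, 1] `&` G = `[0, 1] `&` C by exists G.
have H3 : exists2 C : set R, closed C & `[0, 1] `&` G = `[0, 1] `&` C.
  by exists (~` B); [exact: open_closedC | exact: E].
have {H H1 H2 H3}H := H H1 H2 H3.
have : (`[0, 1] `&` G) 1 by rewrite H /= in_itv /= lexx ler01.
by case=> _ []; rewrite g1.
Qed.

Theorem mainTheorem7 (R : realType) (A : finType) (hp : (1 < #|A|)%N)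
  (k : nat) (U : set 'rV[R]_k) (P : 'rV[R]_k -> (seq A -> seq A))
  (hP : forall u, U u -> is_aut (P u)) :
  aut_functional_plot U P <-> discrete_plot U P.
Proof.
have [Do [Dl [Dc [Dp Ds]]]] := DT_props R A.
split.
  move=> [oU HF]; split=> // u0 Uu0.
  have loc : forall v w, U w -> exists W, open W /\ W w /\ W `<=` U /\
      forall w', W w' -> (fun w => P w v) w' = (fun w => P w v) w.
    move=> v w Uw.
    have HD := HF k U id (fun _ => Vx R v) oU (smooth_id U) (fun _ h => h)
      (Dc _ _ (Vx R v) oU).
    have [_ Hc] := DT_tcont HD.
    have oS := Hc _ (@star_open R A (P w v)).
    eexists; split; first exact: oS.
    split; first by split=> //; left.
    split; first by move=> ? [].
    by move=> w' [_ /= [E|[? [? [? //]]]]]; case: E.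
  have : nbhs u0 U by exact: open_nbhs_nbhs.
  move=> /nbhs_ballP [r /= rpos Br].
  exists (ball u0 r); split; first exact: ball_open.
  split; first exact: ballxx.
  split=> // w Bw; apply/funext => v.
  apply: (seg_const (loc v)) => t /andP [t0 t1]; apply: Br.
  move: Bw; rewrite -ball_normE /= => Bw.
  rewrite opprD addrA subrr add0r normrN normrZ ger0_norm // distrC.
  apply: le_lt_trans Bw; rewrite -[leRHS]mul1r; apply: ler_wpM2r => //.
move=> [oU HD]; split=> // m W f Q oW sf fW HQ.
apply: Ds => // w0 Ww0.
have [N [oN [Nf [NU HN]]]] := HD _ (fW _ Ww0).
have oW' : open (W `&` f @^-1` N) by exact: (open_pre oW (smooth_cont sf) oN).
exists (W `&` f @^-1` N); split; first exact: oW'.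
split; first by split.
split; first by move=> ? [].
have HQ' : DT (W `&` f @^-1` N) Q.
  exact: (Dp m m W _ Q id HQ oW' (smooth_id _) (fun v h => h.1)).
apply: (Dl _ _ (realize (P (f w0)) \o Q)).
  exact: (DT_realize (hP _ (fW _ Ww0)) HQ').
by move=> w [_ Nw] /=; rewrite HN.
Qed.
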